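(* Let $\mathbb{K}$ be a field of characteristic zero, $\mathbb{F}$ an algebraic closure of $\mathbb{K}$, and $\alpha\in\mathbb{F}$ algebraic of degree $n$ over $\mathbb{K}$. Let $\psi(t)\in \mathbb{K}(\alpha)(t)^m$ be a proper parametrization of a rational curve $\mathcal{C}\subseteq\mathbb{F}^m$, and assume that $\mathcal{C}$ is defined over $\mathbb{K}$. Let $\phi=(\phi_0,\ldots,\phi_{n-1})$ be the standard parametrization of the hypercircle $\mathcal{U}$ associated to $\psi$. Let $\sigma$ be a $\mathbb{K}$-automorphism of $\mathbb{F}$, let $\phi^{\sigma}$, $\psi^{\sigma}$ be the conjugate parametrizations, and let $u_{\sigma}(t)=(\phi^{\sigma})^{-1}\circ\phi=\sum_{i=0}^{n-1}\sigma(\alpha)^i\phi_i(t)$ be the conjugation isomorphism induced by $\mathcal{U}$ between the pencils of hyperplanes $\{\sum_{i}\alpha^ix_i=t\}$ and $\{\sum_i\sigma(\alpha)^ix_i=t\}$. Then $u_{\sigma}=(\psi^{\sigma})^{-1}\circ\psi$ (as rational maps), i.e. $\psi(t)=\psi^{\sigma}(u_\sigma(t))$.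
   Context: A parametrization $\psi$ of $\mathcal{C}$ is proper if it is birational onto $\mathcal{C}$. A curve is defined over a subfield $\mathbb{L}$ if it is the zero set of polynomials with coefficients in $\mathbb{L}$. For a $\mathbb{K}$-automorphism $\sigma$ of $\mathbb{F}$ and a rational function $f$ with coefficients in $\mathbb{F}$, $f^{\sigma}$ denotes the function obtained by applying $\sigma$ to the coefficients of $f$ (componentwise for tuples). Hypercircle associated to $\psi=(\psi_1,\dots,\psi_m)$: substitute $t=\sum_{i=0}^{n-1}\alpha^it_i$ with new variables $t_0,\dots,t_{n-1}$ and write $\psi_j(\sum_i\alpha^it_i)=\sum_{i=0}^{n-1}\alpha^i F_{ij}/D$ with $F_{ij},D\in\mathbb{K}[t_0,\dots,t_{n-1}]$; let $\mathcal{Z}\subseteq\mathbb{F}^n$ be the Zariski closure of $\{F_{ij}=0,\ 1\le i\le n-1,\ 1\le j\le m\}\setminus\{D=0\}$. When $\mathcal{C}$ is defined over $\mathbb{K}$, $\mathcal{Z}$ has exactly one irreducible component of dimension $1$, the hypercircle $\mathcal{U}$; it is a rational curve parametrized by the pencil of hyperplanes $\{\sum_{i=0}^{n-1}\alpha^ix_i=t\}$, and the resulting proper parametrization $\phi=(\phi_0,\dots,\phi_{n-1})\in\mathbb{K}(\alpha)(t)^n$, characterized by $\sum_{i=0}^{n-1}\alpha^i\phi_i(t)=t$, is called the standard parametrization of $\mathcal{U}$; the inverse of $\phi^\sigma$ is $(x_0,\dots,x_{n-1})\mapsto\sum_i\sigma(\alpha)^ix_i$. *)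

(* Defs.v *)
From HB Require Import structures.
From mathcomp Require Import all_boot all_order all_algebra.
From mathcomp Require Export mpoly.
Set Implicit Arguments.
Unset Strict Implicit.
Unset Printing Implicit Defensive.
Import Order.TTheory GRing.Theory Num.Theory.
Local Open Scope ring_scope.

Section Hyper.
Variables (K : fieldType) (F : closedFieldType) (iota : {rmorphism K -> F}).

Definition inK (x : F) : Prop := exists k : K, x = iota k.

(** F is algebraic over K (together with algebraic closedness of F this
    says that F is an algebraic closure of K) *)
Definition algebraic_over_K : Prop :=
  forall x : F, exists p : {poly K}, p != 0 /\ root (map_poly iota p) x.

Definition alg_degree (alpha : F) (n : nat) : Prop :=
  (exists p : {poly K}, [/\ p != 0, size p = n.+1 & root (map_poly iota p) alpha])
  /\ forall p : {poly K}, p != 0 -> root (map_poly iota p) alpha -> (n.+1 <= size p)%N.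

(** elements of K(alpha) = K[alpha] *)
Definition inKa (alpha x : F) : Prop :=
  exists p : {poly K}, x = (map_poly iota p).[alpha].

Definition K_automorphism (s : {rmorphism F -> F}) : Prop :=
  bijective s /\ forall k : K, s (iota k) = iota k.

Definition pset (N : nat) := ('I_N -> F) -> Prop.
Definition seteq N (A B : pset N) := forall x, A x <-> B x.
Definition subset N (A B : pset N) := forall x, A x -> B x.
Definition psubset N (A B : pset N) := subset A B /\ exists x, B x /\ ~ A x.

Definition zeros N (P : {mpoly F[N]} -> Prop) : pset N :=
  fun x => forall p, P p -> p.@[x] = 0.
Definition zclosed N (A : pset N) : Prop :=
  exists P : {mpoly F[N]} -> Prop, seteq A (zeros P).
Definition zclosure N (A : pset N) : pset N :=
  zeros (fun p : {mpoly F[N]} => forall x, A x -> p.@[x] = 0).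
Definition irreducible N (A : pset N) : Prop :=
  [/\ zclosed A, exists x, A x &
      forall B C : pset N, zclosed B -> zclosed C ->
        subset A (fun x => B x \/ C x) -> subset A B \/ subset A C].
Definition dim1 N (A : pset N) : Prop :=
  [/\ irreducible A,
      exists B, irreducible B /\ psubset B A &
      forall B0 B1, irreducible B0 -> irreducible B1 ->
        psubset B0 B1 -> psubset B1 A -> False].
Definition component N (A Z : pset N) : Prop :=
  [/\ irreducible A, subset A Z &
      forall W, irreducible W -> subset A W -> subset W Z -> seteq W A].
Definition mpoly_over_K N (p : {mpoly F[N]}) : Prop := forall m, inK p@_m.

Definition defined_over_K N (A : pset N) : Prop :=
  exists P : {mpoly F[N]} -> Prop,
    (forall p, P p -> mpoly_over_K p) /\ seteq A (zeros P).

Definition rfun := ({poly F} * {poly F})%type.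
Definition rdef (f : rfun) (t : F) : bool := f.2.[t] != 0.
Definition rval (f : rfun) (t : F) : F := f.1.[t] / f.2.[t].
Definition rfun_over_Ka (alpha : F) (f : rfun) : Prop :=
  f.2 != 0 /\ forall i, inKa alpha f.1`_i /\ inKa alpha f.2`_i.
Definition rconj (s : {rmorphism F -> F}) (f : rfun) : rfun :=
  (map_poly s f.1, map_poly s f.2).

Definition cofinitely (P : F -> Prop) : Prop :=
  exists S : seq F, forall t, t \notin S -> P t.

Definition rimage N (psi : 'I_N -> rfun) : pset N :=
  fun x => exists t, (forall j, rdef (psi j) t) /\ forall j, x j = rval (psi j) t.

Definition parametrizes N (psi : 'I_N -> rfun) (C : pset N) : Prop :=
  (forall j, (psi j).2 != 0) /\ seteq C (zclosure (rimage psi)).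

(** psi is a proper (birational) parametrization of C: it parametrizes C and
    has a rational inverse N0/D0 on C (D0 not identically zero on C) *)
Definition proper_param N (psi : 'I_N -> rfun) (C : pset N) : Prop :=
  parametrizes psi C /\
  exists N0 D0 : {mpoly F[N]},
    (exists x, C x /\ D0.@[x] != 0) /\
    cofinitely (fun t => (forall j, rdef (psi j) t) ->
       let x := fun j => rval (psi j) t in D0.@[x] != 0 /\ N0.@[x] / D0.@[x] = t).

Definition lin_form (n : nat) (alpha : F) : {mpoly F[n]} :=
  \sum_(i < n) (alpha ^+ i) *: 'X_i.

Definition pcomp_m (n : nat) (p : {poly F}) (q : {mpoly F[n]}) : {mpoly F[n]} :=
  (map_poly (@mpolyC n F) p).[q].

(** The data (F_ij, D) of the hypercircle construction:
    psi_j(sum_i alpha^i t_i) = sum_i alpha^i F_ij / D with F_ij, D in K[t_0..t_{n-1}] *)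
Definition hyper_decomp (n m : nat) (alpha : F) (psi : 'I_m -> rfun)
    (Fij : 'I_n -> 'I_m -> {mpoly F[n]}) (D : {mpoly F[n]}) : Prop :=
  [/\ D != 0, mpoly_over_K D, forall i j, mpoly_over_K (Fij i j) &
      forall j, pcomp_m (psi j).1 (lin_form n alpha) * D
                = pcomp_m (psi j).2 (lin_form n alpha) *
                  \sum_(i < n) (alpha ^+ i) *: Fij i j].

Definition hyperZ (n m : nat) (Fij : 'I_n -> 'I_m -> {mpoly F[n]}) (D : {mpoly F[n]}) : pset n :=
  zclosure (fun x => D.@[x] != 0 /\ forall (i : 'I_n) j, (0 < i)%N -> (Fij i j).@[x] = 0).

End Hyper.

(* Main.v *)
Require Import Defs.
From HB Require Import structures.
From mathcomp Require Import all_boot all_order all_algebra.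
From mathcomp Require Import mpoly.
From mathcomp Require Import ring.
Import GRing.Theory.
Local Open Scope ring_scope.
Set Implicit Arguments.
Unset Strict Implicit.

Section Helpers.
Variable F : closedFieldType.

Lemma fresh (s : seq F) : exists x, x \notin s.
Proof.
set P := \prod_(z <- 0 :: s) ('X - z%:P).
have szP : size P = (size s).+2 by rewrite size_prod_XsubC.
have : size (P - 1) != 1%N.
  rewrite size_polyDl; first by rewrite szP.
  by rewrite size_polyN size_poly1 szP.
case/closed_rootP=> r; rewrite rootE hornerD hornerN hornerC subr_eq0 => /eqP Pr.
exists r; apply/negP=> rs.
have : root P r by rewrite root_prod_XsubC inE rs orbT.
by rewrite rootE Pr oner_eq0.
Qed.

Lemma avoid k (S : seq F) : exists rs : seq F,
  [/\ size rs = k, uniq rs & all (fun x => x \notin S) rs].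
Proof.
elim: k => [|k [rs [sz u a]]]; first by exists [::].
have [x xn] := fresh (S ++ rs).
move: xn; rewrite mem_cat negb_or => /andP[xS xr].
by exists (x :: rs); rewrite /= sz u xS xr a.
Qed.

Lemma cof_root0 (p : {poly F}) (S : seq F) :
  (forall t, t \notin S -> p.[t] = 0) -> p = 0.
Proof.
move=> H; apply/eqP; apply/negPn/negP=> pnz.
have [rs [sz u a]] := avoid (size p) S.
suff: (size rs < size p)%N by rewrite sz ltnn.
apply: max_poly_roots pnz _ u.
by apply/allP=> x xr; rewrite rootE H //; move/allP: a; apply.
Qed.

Lemma roots_ex (p : {poly F}) : p != 0 -> exists rs : seq F, forall z, z \notin rs -> p.[z] != 0.
Proof.
move=> pnz; case: (closed_field_poly_normal p) => rs E.
exists rs => z zn; rewrite E hornerZ mulf_neq0 ?lead_coef_eq0 //.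
by have := root_prod_XsubC rs z; rewrite rootE (negbTE zn) => ->.
Qed.

Lemma cof_and (P Q : F -> Prop) : cofinitely P -> cofinitely Q -> cofinitely (fun t => P t /\ Q t).
Proof.
case=> S1 H1 [S2 H2]; exists (S1 ++ S2) => t; rewrite mem_cat negb_or => /andP[a b].
by split; [apply: H1|apply: H2].
Qed.

Lemma cof_mono (P Q : F -> Prop) : (forall t, P t -> Q t) -> cofinitely P -> cofinitely Q.
Proof. by move=> H [S HS]; exists S => t /HS /H. Qed.

Lemma cof_fin (m : nat) (P : 'I_m -> F -> Prop) :
  (forall i, cofinitely (P i)) -> cofinitely (fun t => forall i, P i t).
Proof.
move=> H; have [f Hf] := fin_all_exists H.
exists (flatten [seq f i | i <- enum 'I_m]) => t tn i; apply: Hf.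
apply/negP=> ti; move/negP: tn; apply; apply/flattenP.
by exists (f i) => //; apply: map_f; rewrite mem_enum.
Qed.

Lemma cof_seq (P : F -> F -> Prop) (rs : seq F) :
  (forall r, cofinitely (P r)) -> cofinitely (fun t => forall r, r \in rs -> P r t).
Proof.
move=> H; elim: rs => [|r rs IH]; first by exists [::].
apply: cof_mono (cof_and (H r) IH) => t [a b] r'; rewrite inE => /orP[/eqP->//|]; exact: b.
Qed.

Lemma two_points (P : F -> Prop) : cofinitely P -> exists t1 t2, [/\ t1 != t2, P t1 & P t2].
Proof.
case=> S H; have [t1 t1n] := fresh S; have [t2 t2n] := fresh (t1 :: S).
exists t1, t2; move: t2n; rewrite inE negb_or => /andP[n2 n2'].
by split; [rewrite eq_sym|apply: H|apply: H].
Qed.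

Lemma cof_nz (p : {poly F}) : p != 0 -> cofinitely (fun t => p.[t] != 0).
Proof. by case/roots_ex=> rs H; exists rs. Qed.

Lemma pcompE n (p : {poly F}) (q : {mpoly F[n]}) x : (pcomp_m p q).@[x] = p.[q.@[x]].
Proof.
rewrite /pcomp_m -horner_map -map_poly_comp; congr (_.[_]).
by rewrite map_poly_id // => c _ /=; rewrite mevalC.
Qed.

Lemma pcompM n (p q : {poly F}) (r : {mpoly F[n]}) : pcomp_m (p * q) r = pcomp_m p r * pcomp_m q r.
Proof. by rewrite /pcomp_m rmorphM hornerM. Qed.

Lemma linE n (b : F) x : (lin_form n b).@[x] = \sum_(i < n) b ^+ i * x i.
Proof.
rewrite /lin_form raddf_sum; apply: eq_bigr => i _ /=; rewrite -mevalXU; exact: mevalZ.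
Qed.

Lemma sumE n (b : F) (G : 'I_n -> {mpoly F[n]}) x :
  (\sum_(i < n) b ^+ i *: G i).@[x] = \sum_(i < n) b ^+ i * (G i).@[x].
Proof. rewrite raddf_sum; apply: eq_bigr => i _; exact: mevalZ. Qed.

End Helpers.

Lemma alg4 (R : fieldType) (a1 b1 a2 b2 d s : R) :
  d != 0 -> a1 * d = b1 * s -> a2 * d = b2 * s -> a1 * b2 - b1 * a2 = 0.
Proof.
move=> dnz e1 e2.
have h : (a1 * b2 - b1 * a2) * d = b2 * (a1 * d) - b1 * (a2 * d) by ring.
rewrite e1 e2 in h; apply: (mulIf dnz); rewrite h mul0r; ring.
Qed.

Theorem theorem1
  (K : fieldType) (F : closedFieldType) (iota : {rmorphism K -> F})
  (charK0 : [pchar K] =i pred0)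
  (Falg : algebraic_over_K iota)
  (alpha : F) (n : nat) (alphadeg : alg_degree iota alpha n)
  (m : nat) (psi : 'I_m -> rfun F) (C : pset F m)
  (psiKa : forall j, rfun_over_Ka iota alpha (psi j))
  (Ccurve : dim1 C)
  (psiproper : proper_param psi C)
  (CK : defined_over_K iota C)
  (Fij : 'I_n -> 'I_m -> {mpoly F[n]}) (D : {mpoly F[n]})
  (hdec : hyper_decomp iota alpha psi Fij D)
  (U : pset F n)
  (Ucomp : component U (hyperZ Fij D)) (Udim : dim1 U)
  (phi : 'I_n -> rfun F)
  (phiKa : forall i, rfun_over_Ka iota alpha (phi i))
  (phiproper : proper_param phi U)
  (phistd : cofinitely (fun t => (forall i, rdef (phi i) t) ->
                 \sum_(i < n) alpha ^+ i * rval (phi i) t = t))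
  (sigma : {rmorphism F -> F}) (sigmaK : K_automorphism iota sigma) :
  cofinitely (fun t =>
    (forall i, rdef (phi i) t) /\
    let u := \sum_(i < n) sigma alpha ^+ i * rval (phi i) t in
    forall j, [/\ rdef (psi j) t, rdef (rconj sigma (psi j)) u &
                  rval (psi j) t = rval (rconj sigma (psi j)) u]).
Proof.
have Fnz : forall j, (psi j).2 != 0 by move=> j; case: (psiKa j).
have phinz : forall i, (phi i).2 != 0 by move=> i; case: (phiKa i).
case: sigmaK => -[sinv sK1 sK2] sK.
case: hdec => Dnz DK FK HF.
have n_gt0 : (0 < n)%N.
  case: alphadeg => -[p [pnz szp rp]] _; rewrite lt0n; apply/negP => /eqP n0.
  move: szp; rewrite n0 => /eqP/size_poly1P [c cnz pc].
  by move: rp; rewrite pc map_polyC rootC fmorph_eq0 (negbTE cnz).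
pose g := fun j => gcdp (psi j).1 (psi j).2.
pose a := fun j => (psi j).1 %/ g j.
pose b := fun j => (psi j).2 %/ g j.
have numE j : (psi j).1 = a j * g j by rewrite divpK // dvdp_gcdl.
have denE j : (psi j).2 = b j * g j by rewrite divpK // dvdp_gcdr.
have gnz j : g j != 0 by rewrite gcdp_eq0 negb_and Fnz orbT.
have cop j : coprimep (a j) (b j) by apply: coprimep_div_gcd; rewrite Fnz orbT.
clearbody a b g.
have bnz j : b j != 0 by apply: contra (Fnz j); rewrite denE => /eqP->; rewrite mul0r.
have copS j : coprimep (map_poly sigma (b j)) (map_poly sigma (a j))
  by rewrite coprimep_map coprimep_sym.
pose La := lin_form n alpha.
pose Ls := lin_form n (sigma alpha).
pose S := fun j => \sum_(i < n) alpha ^+ i *: Fij i j.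
have M1 j : pcomp_m (a j) La * D = pcomp_m (b j) La * S j.
  have := HF j; rewrite numE denE !pcompM => E.
  have gLnz : pcomp_m (g j) La != 0.
    case: (cof_nz (gnz j)) => Sx HS; have [s sn] := fresh Sx; have gs := HS s sn.
    apply/negP => /eqP h.
    have := congr1 (meval (fun i : 'I_n => if val i == 0%N then s else 0)) h.
    rewrite pcompE linE meval0 (bigD1 (Ordinal n_gt0)) //= big1 ?expr0 ?mul1r ?addr0.
      by move/eqP: gs.
    move=> i ni; case: ifP => [/eqP i0|]; last by rewrite mulr0.
    by case/negP: ni; apply/eqP/val_inj.
  apply: (mulfI gLnz); rewrite !mulrA ![pcomp_m (g j) La * _]mulrC; exact: E.
have L P : mpoly_over_K iota P -> forall y, sigma (P.@[y]) = P.@[fun i => sigma (y i)].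
  move=> HP y; rewrite !mevalE rmorph_sum; apply: eq_bigr => mm _.
  rewrite rmorphM rmorph_prod; case: (HP mm) => k ->; rewrite sK; congr (_ * _).
  by apply: eq_bigr => i _; rewrite rmorphXn.
pose Gp := fun j => pcomp_m (a j) La * pcomp_m (map_poly sigma (b j)) Ls
                  - pcomp_m (b j) La * pcomp_m (map_poly sigma (a j)) Ls.
have KEYW (j : 'I_m) (x : 'I_n -> F) : D.@[x] != 0 -> (forall (i : 'I_n) (j : 'I_m), (0 < i)%N -> (Fij i j).@[x] = 0) ->
    (Gp j).@[x] = 0.
  move=> Dx Fx.
  pose y := fun i => sinv (x i).
  have xy : (fun i => sigma (y i)) =1 x by move=> i; rewrite /y sK2.
  have E1 := congr1 (meval x) (M1 j); rewrite !mevalM !pcompE in E1.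
  have E2 := congr1 (fun P => sigma (P.@[y])) (M1 j).
  rewrite /= !mevalM !rmorphM !pcompE -!horner_map in E2.
  have hL : sigma (La.@[y]) = Ls.@[x].
    rewrite !linE rmorph_sum; apply: eq_bigr => i _.
    by rewrite rmorphM rmorphXn /y sK2.
  have hD : sigma (D.@[y]) = D.@[x] by rewrite L // (meval_eq _ xy).
  have hS : sigma ((S j).@[y]) = \sum_(i < n) sigma alpha ^+ i * (Fij i j).@[x].
    rewrite sumE rmorph_sum; apply: eq_bigr => i _.
    by rewrite rmorphM rmorphXn L // (meval_eq _ xy).
  have hS' : (S j).@[x] = \sum_(i < n) sigma alpha ^+ i * (Fij i j).@[x].
    rewrite sumE; apply: eq_bigr => i _.
    case: (posnP i) => [i0|ip]; last by rewrite Fx // !mulr0.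
    by rewrite i0 !expr0.
  rewrite hL hD hS in E2; rewrite hS' in E1.
  rewrite mevalB !mevalM !pcompE; exact: alg4 Dx E1 E2.
have phiU t : (forall i, rdef (phi i) t) -> U (fun i => rval (phi i) t).
  case: phiproper => -[_ Useq] _ dom; apply/Useq => p Hp; apply: Hp.
  by exists t; split.
have UG x : U x -> forall j, (Gp j).@[x] = 0.
  case: Ucomp => _ sub _ Ux j; apply: (sub x Ux (Gp j)) => y [Dy Fy].
  exact: KEYW.
pose u := fun t => \sum_(i < n) sigma alpha ^+ i * rval (phi i) t.
have KEY t : (forall i, rdef (phi i) t) -> \sum_(i < n) alpha ^+ i * rval (phi i) t = t ->
    forall j, (a j).[t] * (map_poly sigma (b j)).[u t]
            = (b j).[t] * (map_poly sigma (a j)).[u t].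
  move=> dom std j; have := UG _ (phiU t dom) j.
  rewrite mevalB !mevalM !pcompE !linE std => /eqP; rewrite subr_eq0 => /eqP.
  done.
pose Good0 := fun t => (forall i, rdef (phi i) t) /\ \sum_(i < n) alpha ^+ i * rval (phi i) t = t.
have G0 : cofinitely Good0.
  apply: cof_mono (cof_and (cof_fin (fun i => cof_nz (phinz i))) phistd).
  by move=> t [dom std]; split => //; apply: std.
have psidom : cofinitely (fun t => forall j, (psi j).2.[t] != 0).
  exact: cof_fin (fun j => cof_nz (Fnz j)).
have NC c : cofinitely (fun t => Good0 t -> u t != c).
  case: (pickP (fun j => a j * (map_poly sigma (b j)).[c]%:P
                       - b j * (map_poly sigma (a j)).[c]%:P != 0)) => [j Rnz | allR].
    case: (cof_nz Rnz) => Sx HS; exists Sx => t tS [dom std]; apply/eqP => uc.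
    have := HS t tS; have := KEY t dom std j; rewrite uc => K1.
    by rewrite !hornerE K1 subrr eqxx.
  exfalso.
  have Rt j t : (a j).[t] * (map_poly sigma (b j)).[c] = (b j).[t] * (map_poly sigma (a j)).[c].
    move/negbT: (allR j); rewrite negbK => /eqP R0.
    have := congr1 (fun p => p.[t]) R0; rewrite /= !hornerE => /eqP; rewrite subr_eq0.
    by move/eqP.
  have bsnz j : (map_poly sigma (b j)).[c] != 0.
    apply/negP => /eqP b0.
    have asnz := coprimep_root (copS j) (introT eqP b0).
    have := Rt j; rewrite b0 => H0.
    have : b j = 0.
      apply: (cof_root0 (S := [::])) => t _.
      by have /eqP := H0 t; rewrite mulr0 eq_sym mulf_eq0 (negbTE asnz) orbF => /eqP.
    by move/eqP; rewrite (negbTE (bnz j)).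
  have cst j t : (psi j).2.[t] != 0 ->
      rval (psi j) t = (map_poly sigma (a j)).[c] / (map_poly sigma (b j)).[c].
    rewrite /rval numE denE !hornerM mulf_eq0 negb_or => /andP[bt gt].
    rewrite invfM mulrACA divff // mulr1; apply/eqP; rewrite eqr_div //.
    by rewrite Rt mulrC.
  case: psiproper => _ [N0 [D0 [_ Hcof]]].
  have [t1 [t2 [ne [d1 h1] [d2 h2]]]] := two_points (cof_and psidom Hcof).
  have [_ e1] := h1 d1; have [_ e2] := h2 d2.
  move/eqP: ne; apply; move: e1 e2.
  rewrite (meval_eq N0 (fun j => cst j t1 (d1 j))) (meval_eq D0 (fun j => cst j t1 (d1 j))).
  rewrite (meval_eq N0 (fun j => cst j t2 (d2 j))) (meval_eq D0 (fun j => cst j t2 (d2 j))).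
  by move=> <- <-.
have rsj j : exists rs : seq F, forall z, z \notin rs -> (map_poly sigma (psi j).2).[z] != 0.
  by apply: roots_ex; rewrite map_poly_eq0.
have [rs Hrs] := fin_all_exists rsj.
have C4 : cofinitely (fun t => forall j, forall r, r \in rs j -> Good0 t -> u t != r).
  exact: cof_fin (fun j => cof_seq (rs j) (fun r => NC r)).
apply: cof_mono (cof_and G0 (cof_and psidom C4)) => t [[dom std] [pd c4]].
split => //; cbv zeta; move=> j.
have dS : (map_poly sigma (psi j).2).[u t] != 0.
  apply: Hrs; apply/negP => ur; have := c4 j _ ur (conj dom std); by rewrite eqxx.
split; [exact: pd | exact: dS | ].
change (rval (psi j) t = rval (rconj sigma (psi j)) (u t)).
move: (pd j) dS; rewrite /rval /rconj /= numE denE !rmorphM !hornerM.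
rewrite !mulf_eq0 !negb_or => /andP[bt gt] /andP[bs gs].
rewrite [in LHS]invfM [in LHS]mulrACA [in LHS]divff // mulr1.
rewrite [in RHS]invfM [in RHS]mulrACA [in RHS]divff // mulr1.
apply/eqP; rewrite eqr_div //.
by rewrite (KEY t dom std j) mulrC.
Qed.
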